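(* On $\mathbb{R}^3$ with coordinates $(x,y,z)$ (the universal cover of the isometry group $E(2)$ of the Euclidean plane, with its left-invariant structure), consider the Lorentzian metric $$g_1 = (\sin y\,dx + \cos y\,dz)^2 + dy^2 - (\cos y\,dx - \sin y\,dz)^2 .$$ Let $F_1 = \sin y\,\partial_x + \cos y\,\partial_z$, $F_2 = \partial_y$, $F_3 = \cos y\,\partial_x - \sin y\,\partial_z$, and let $$X = 2(z\cos y + x\sin y)\,F_1 + 2(x\cos y - z\sin y)\,F_3 .$$ Then $$2\,\mathrm{Ric}[g_1] + L_X g_1 - 4\,g_1 = 0 ,$$ and there is no smooth function $f$ on $\mathbb{R}^3$ with $X = \nabla f$ (gradient with respect to $g_1$). Hence $g_1$ is a shrinking non-gradient Lorentzian Ricci soliton.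
   Context: For a pseudo-Riemannian metric $g$ on a manifold $M$, a vector field $X$ and a constant $\alpha$, $(M,g,X,\alpha)$ is a Ricci soliton structure if $2\,\mathrm{Ric}[g] + L_X g + \alpha g = 0$, where $L_X$ denotes the Lie derivative. The soliton is called shrinking, steady, or expanding according as $\alpha<0$, $\alpha=0$, or $\alpha>0$. It is called gradient if $X=\nabla f$ for some function $f$, and non-gradient if $X\neq \nabla f$ for every function $f$. *)

(* Defs.v *)
From Stdlib Require Import Reals Lra ClassicalEpsilon.
Open Scope R_scope.

Definition pt : Type := (R * R * R)%type.
Inductive idx : Type := I0 | I1 | I2.

Definition coord (i : idx) (p : pt) : R :=
  match p with (x, y, z) =>
    match i with I0 => x | I1 => y | I2 => z end end.

Definition upd (p : pt) (i : idx) (t : R) : pt :=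
  match p with (x, y, z) =>
    match i with I0 => (t, y, z) | I1 => (x, t, z) | I2 => (x, y, t) end end.

Definition sum3 (f : idx -> R) : R := f I0 + f I1 + f I2.

Definition has_pd (i : idx) (f : pt -> R) (p : pt) (l : R) : Prop :=
  derivable_pt_lim (fun t => f (upd p i t)) (coord i p) l.

(** The partial derivative as a function (the value whenever it exists). *)
Definition pd (i : idx) (f : pt -> R) (p : pt) : R :=
  epsilon (inhabits 0) (fun l => has_pd i f p l).

Fixpoint Ck (n : nat) (f : pt -> R) : Prop :=
  match n with
  | O => forall p : pt, forall eps, eps > 0 -> exists delta, delta > 0 /\
           forall q : pt, (forall i, Rabs (coord i q - coord i p) < delta) ->
             Rabs (f q - f p) < eps
  | S m => (forall p : pt, forall eps, eps > 0 -> exists delta, delta > 0 /\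
           forall q : pt, (forall i, Rabs (coord i q - coord i p) < delta) ->
             Rabs (f q - f p) < eps) /\
           forall i : idx, exists g : pt -> R,
             (forall p, has_pd i f p (g p)) /\ Ck m g
  end.
Definition smooth (f : pt -> R) : Prop := forall n, Ck n f.

Definition sym2 : Type := idx -> idx -> pt -> R.
Definition vfield : Type := idx -> pt -> R.

Definition m3det (a : idx -> idx -> R) : R :=
  a I0 I0 * (a I1 I1 * a I2 I2 - a I1 I2 * a I2 I1)
  - a I0 I1 * (a I1 I0 * a I2 I2 - a I1 I2 * a I2 I0)
  + a I0 I2 * (a I1 I0 * a I2 I1 - a I1 I1 * a I2 I0).

Definition nxt (i : idx) : idx := match i with I0 => I1 | I1 => I2 | I2 => I0 end.
Definition nxt2 (i : idx) : idx := nxt (nxt i).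

(* (i,j) entry of the inverse: cofactor C_{ji} / det *)
Definition m3inv (a : idx -> idx -> R) (i j : idx) : R :=
  (a (nxt j) (nxt i) * a (nxt2 j) (nxt2 i)
   - a (nxt j) (nxt2 i) * a (nxt2 j) (nxt i)) / m3det a.

Definition ginv (g : sym2) (i j : idx) (p : pt) : R :=
  m3inv (fun a b => g a b p) i j.

Definition christoffel (g : sym2) (k i j : idx) (p : pt) : R :=
  / 2 * sum3 (fun l => ginv g k l p *
     (pd i (g j l) p + pd j (g i l) p - pd l (g i j) p)).

Definition ricci (g : sym2) (i j : idx) (p : pt) : R :=
  sum3 (fun k => pd k (christoffel g k i j) p)
  - sum3 (fun k => pd j (christoffel g k i k) p)
  + sum3 (fun k => sum3 (fun l =>
        christoffel g k k l p * christoffel g l i j p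
      - christoffel g k j l p * christoffel g l i k p)).

Definition lie_g (X : vfield) (g : sym2) (i j : idx) (p : pt) : R :=
  sum3 (fun k => X k p * pd k (g i j) p
                 + g k j p * pd i (X k) p
                 + g i k p * pd j (X k) p).

Definition grad (g : sym2) (f : pt -> R) (i : idx) (p : pt) : R :=
  sum3 (fun j => ginv g i j p * pd j f p).

Definition ricci_soliton (g : sym2) (X : vfield) (alpha : R) : Prop :=
  forall i j p, 2 * ricci g i j p + lie_g X g i j p + alpha * g i j p = 0.

Definition shrinking (alpha : R) : Prop := alpha < 0.

Definition non_gradient (g : sym2) (X : vfield) : Prop :=
  ~ exists f : pt -> R, smooth f /\ forall i p, X i p = grad g f i p.

(** The specific data. y = coord I1. Coframe components (dx,dy,dz). *)
Definition theta1 (i : idx) (p : pt) : R :=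
  match i with I0 => sin (coord I1 p) | I1 => 0 | I2 => cos (coord I1 p) end.
Definition theta2 (i : idx) (p : pt) : R :=
  match i with I0 => 0 | I1 => 1 | I2 => 0 end.
Definition theta3 (i : idx) (p : pt) : R :=
  match i with I0 => cos (coord I1 p) | I1 => 0 | I2 => - sin (coord I1 p) end.

Definition g1 : sym2 := fun i j p =>
  theta1 i p * theta1 j p + theta2 i p * theta2 j p - theta3 i p * theta3 j p.

Definition F1 : vfield := fun i p =>
  match i with I0 => sin (coord I1 p) | I1 => 0 | I2 => cos (coord I1 p) end.
Definition F2 : vfield := fun i p =>
  match i with I0 => 0 | I1 => 1 | I2 => 0 end.
Definition F3 : vfield := fun i p =>
  match i with I0 => cos (coord I1 p) | I1 => 0 | I2 => - sin (coord I1 p) end.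

Definition Xsol : vfield := fun i p =>
  let x := coord I0 p in let y := coord I1 p in let z := coord I2 p in
  2 * (z * cos y + x * sin y) * F1 i p + 2 * (x * cos y - z * sin y) * F3 i p.

(* Main.v *)
Require Import Defs.
From Stdlib Require Import Reals Lra Nsatz ClassicalEpsilon FunctionalExtensionality.
Open Scope R_scope.

Lemma pd_eq i f p l : has_pd i f p l -> pd i f p = l.
Proof.
  intro H. unfold pd.
  assert (E : exists l, has_pd i f p l) by (exists l; exact H).
  pose proof (epsilon_spec (inhabits 0) _ E) as H2.
  eapply uniqueness_limite; eauto.
Qed.

Lemma D_const c x : derivable_pt_lim (fun _ => c) x 0.
Proof. apply derivable_pt_lim_const. Qed.
Lemma D_id x : derivable_pt_lim (fun t => t) x 1.
Proof. apply derivable_pt_lim_id. Qed.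
Lemma D_plus A B x la lb : derivable_pt_lim A x la -> derivable_pt_lim B x lb ->
  derivable_pt_lim (fun t => A t + B t) x (la + lb).
Proof. intros; apply (derivable_pt_lim_plus A B); auto. Qed.
Lemma D_minus A B x la lb : derivable_pt_lim A x la -> derivable_pt_lim B x lb ->
  derivable_pt_lim (fun t => A t - B t) x (la - lb).
Proof. intros; apply (derivable_pt_lim_minus A B); auto. Qed.
Lemma D_mult A B x la lb : derivable_pt_lim A x la -> derivable_pt_lim B x lb ->
  derivable_pt_lim (fun t => A t * B t) x (la * B x + A x * lb).
Proof. intros; apply (derivable_pt_lim_mult A B); auto. Qed.
Lemma D_opp A x la : derivable_pt_lim A x la ->
  derivable_pt_lim (fun t => - A t) x (- la).
Proof. intros; apply (derivable_pt_lim_opp A); auto. Qed.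
Lemma D_sin A x la : derivable_pt_lim A x la ->
  derivable_pt_lim (fun t => sin (A t)) x (cos (A x) * la).
Proof. intros. apply (derivable_pt_lim_comp A sin); auto. apply derivable_pt_lim_sin. Qed.
Lemma D_cos A x la : derivable_pt_lim A x la ->
  derivable_pt_lim (fun t => cos (A t)) x (- sin (A x) * la).
Proof. intros. apply (derivable_pt_lim_comp A cos); auto. apply derivable_pt_lim_cos. Qed.

Ltac D :=
  match goal with
  | |- derivable_pt_lim (fun _ => ?c) _ _ => apply D_const
  | |- derivable_pt_lim (fun t => t) _ _ => apply D_id
  | |- derivable_pt_lim (fun t => @?A t + @?B t) _ _ => apply (D_plus A B); [D|D]
  | |- derivable_pt_lim (fun t => @?A t - @?B t) _ _ => apply (D_minus A B); [D|D]
  | |- derivable_pt_lim (fun t => @?A t * @?B t) _ _ => apply (D_mult A B); [D|D]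
  | |- derivable_pt_lim (fun t => - @?A t) _ _ => apply (D_opp A); D
  | |- derivable_pt_lim (fun t => sin (@?A t)) _ _ => apply (D_sin A); D
  | |- derivable_pt_lim (fun t => cos (@?A t)) _ _ => apply (D_cos A); D
  end.

Lemma dl_eq f x l l' : derivable_pt_lim f x l' -> l' = l -> derivable_pt_lim f x l.
Proof. intros H <-; exact H. Qed.

Lemma cosq y : cos y ^ 2 = 1 - sin y ^ 2.
Proof. pose proof (sin2_cos2 y). unfold Rsqr in H. nra. Qed.

Definition dth1 (i : idx) (p : pt) : R :=
  match i with I0 => cos (coord I1 p) | I1 => 0 | I2 => - sin (coord I1 p) end.
Definition dth3 (i : idx) (p : pt) : R :=
  match i with I0 => - sin (coord I1 p) | I1 => 0 | I2 => - cos (coord I1 p) end.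
Definition dg1 (i j : idx) (p : pt) : R :=
  dth1 i p * theta1 j p + theta1 i p * dth1 j p - (dth3 i p * theta3 j p + theta3 i p * dth3 j p).
Definition Dg (k i j : idx) (p : pt) : R := match k with I1 => dg1 i j p | _ => 0 end.

Ltac U := cbv beta iota delta [upd coord g1 theta1 theta2 theta3 Xsol F1 F2 F3 dth1 dth3 dg1 Dg sum3 nxt nxt2].

Lemma pd_g1 k i j q : pd k (g1 i j) q = Dg k i j q.
Proof.
  destruct q as [[x y] z]; apply pd_eq; unfold has_pd;
  destruct k, i, j; U; (eapply dl_eq; [D | cbv beta; ring]).
Qed.

Lemma det_g1 q : m3det (fun a b => g1 a b q) = -1.
Proof.
  destruct q as [[x y] z]. unfold m3det. U. pose proof (cosq y). ring [H].
Qed.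

Lemma ginv_g1 i j q : ginv g1 i j q = g1 i j q.
Proof.
  unfold ginv, m3inv. rewrite det_g1. destruct q as [[x y] z]. pose proof (cosq y).
  unfold Rdiv. replace (/ -1) with (-1) by field.
  destruct i, j; simpl nxt2; simpl nxt; U; ring [H].
Qed.

Definition Gam (k i j : idx) (q : pt) : R :=
  / 2 * sum3 (fun l => g1 k l q * (Dg i j l q + Dg j i l q - Dg l i j q)).

Lemma chris_eq : christoffel g1 = Gam.
Proof.
  do 4 (apply functional_extensionality; intro).
  unfold christoffel, Gam, sum3. rewrite !ginv_g1, !pd_g1. reflexivity.
Qed.

Ltac solve_pd :=
  unfold has_pd; cbv beta iota zeta delta [upd coord g1 theta1 theta2 theta3 Xsol F1 F2 F3 dth1 dth3 dg1 Dg sum3 nxt nxt2 Gam]; D.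

Ltac rwpd :=
  match goal with |- context [pd ?i ?f ?p] =>
    let H := fresh in eassert (H : has_pd i f p _) by solve_pd;
    rewrite (pd_eq _ _ _ _ H); clear H
  end.

Lemma main1 i j p : 2 * ricci g1 i j p + lie_g Xsol g1 i j p - 4 * g1 i j p = 0.
Proof.
  destruct p as [[x y] z]. pose proof (cosq y) as Hc.
  unfold ricci, lie_g, sum3. rewrite chris_eq, !pd_g1.
  destruct i, j.
  all: repeat rwpd.
  all: cbv beta iota zeta delta [upd coord g1 theta1 theta2 theta3 Xsol F1 F2 F3 dth1 dth3 dg1 Dg sum3 nxt nxt2 Gam].
  all: field [Hc].
Qed.

Lemma const_ab h a b : a < b -> (forall c, derivable_pt_lim h c 0) -> h b = h a.
Proof.
  intros H H0. destruct (MVT_cor2 h (fun _ => 0) a b H (fun c _ => H0 c)) as [c [E _]]. lra.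
Qed.

Lemma nongrad : non_gradient g1 Xsol.
Proof.
  intros [f [Hs Hg]].
  assert (Hpd : forall i p, has_pd i f p (pd i f p)).
  { intros i p. destruct (Hs 1%nat) as [_ Hd]. destruct (Hd i) as [g [Hg' _]].
    rewrite (pd_eq _ _ _ _ (Hg' p)). apply Hg'. }
  assert (Hy : forall x y z, pd I1 f (x,y,z) = 0).
  { intros x y z. pose proof (Hg I1 (x,y,z)) as H. unfold grad, sum3 in H.
    rewrite !ginv_g1 in H. cbv beta iota zeta delta [Xsol F1 F3 coord g1 theta1 theta2 theta3] in H.
    ring_simplify in H. lra. }
  assert (Hx : forall x y z, pd I0 f (x,y,z) =
      2*(z*(2*sin y*cos y) - x*(cos y*cos y - sin y*sin y))).
  { intros x y z. pose proof (cosq y) as Hc.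
    pose proof (Hg I0 (x,y,z)) as H0. pose proof (Hg I2 (x,y,z)) as H2.
    unfold grad, sum3 in H0, H2. rewrite !ginv_g1 in H0, H2.
    set (a := pd I0 f (x,y,z)) in *. set (b := pd I1 f (x,y,z)) in *. set (c := pd I2 f (x,y,z)) in *.
    cbv beta iota zeta delta [Xsol F1 F3 coord g1 theta1 theta2 theta3] in H0, H2.
    transitivity ((sin y * sin y - cos y * cos y) *
       (2 * (z * cos y + x * sin y) * sin y + 2 * (x * cos y - z * sin y) * cos y)
     + (sin y * cos y + cos y * sin y) *
       (2 * (z * cos y + x * sin y) * cos y + 2 * (x * cos y - z * sin y) * - sin y)).
    - rewrite H0, H2. ring [Hc].
    - ring [Hc]. }
  set (F := fun x y => f (x, y, 0)).
  assert (E1 : (fun t => F t 0 + t * t) 1 = (fun t => F t 0 + t * t) 0).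
  { apply (const_ab (fun t => F t 0 + t * t)); [lra|]. intro c.
    eapply dl_eq. apply (D_plus (fun t => F t 0) (fun t => t * t)).
    - apply (Hpd I0 (c,0,0)).
    - apply (D_mult (fun t => t) (fun t => t)); apply D_id.
    - rewrite Hx, sin_0, cos_0. ring. }
  assert (E2 : (fun t => F t (PI/2) - t * t) 1 = (fun t => F t (PI/2) - t * t) 0).
  { apply (const_ab (fun t => F t (PI/2) - t * t)); [lra|]. intro c.
    eapply dl_eq. apply (D_minus (fun t => F t (PI/2)) (fun t => t * t)).
    - apply (Hpd I0 (c,PI/2,0)).
    - apply (D_mult (fun t => t) (fun t => t)); apply D_id.
    - rewrite Hx, sin_PI2, cos_PI2. ring. }
  assert (E3 : forall x, (fun t => F x t) (PI/2) = (fun t => F x t) 0).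
  { intro x. apply (const_ab (fun t => F x t)); [apply PI2_RGT_0|]. intro c.
    eapply dl_eq. apply (Hpd I1 (x,c,0)). apply Hy. }
  cbv beta in E1, E2, E3. rewrite !E3 in E2. lra.
Qed.

Theorem theorem4p1 :
  (forall i j p, 2 * ricci g1 i j p + lie_g Xsol g1 i j p - 4 * g1 i j p = 0) /\
  ricci_soliton g1 Xsol (-4) /\ shrinking (-4) /\ non_gradient g1 Xsol.
Proof.
  split; [exact main1|]. split; [|split; [unfold shrinking; lra | exact nongrad]].
  intros i j p. pose proof (main1 i j p). lra.
Qed.
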